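(* Let $\mathcal{M}=((X,\mathcal{C}_R),\mathcal{V})$ be a quasi-discrete closure model based on $R$ that is finitely closed and finitely backward closed, viewed as the $\mathcal{T}$-coalgebra $(X,\eta)$ with $\eta(x)=(\mathcal{V}^{-1}(x),\vec{\mathcal{C}}(x),\overleftarrow{\mathcal{C}}(x))$. For all $x_1,x_2\in X$: $x_1\simeq x_2$ iff $x_1$ and $x_2$ are behaviourally equivalent with respect to $\mathcal{T}$.
   Context: $\mathcal{C}_R(A)=A\cup\{x\mid\exists a\in A.\ aRx\}$, $\vec{\mathcal{C}}(x)=\mathcal{C}_R(\{x\})$, $\overleftarrow{\mathcal{C}}(x)=\mathcal{C}_{R^{-1}}(\{x\})$, $\mathcal{V}^{-1}(x)=\{p\in AP\mid x\in\mathcal{V}(p)\}$. Class-based bisimulation: a non-empty equivalence relation $B$ such that $(x_1,x_2)\in B$ implies $\mathcal{V}^{-1}(x_1)=\mathcal{V}^{-1}(x_2)$ and for all $C\in X/B$, $\vec{\mathcal{C}}(x_1)\cap C\neq\emptyset\iff\vec{\mathcal{C}}(x_2)\cap C\neq\emptyset$ and $\overleftarrow{\mathcal{C}}(x_1)\cap C\neq\emptyset\iff\overleftarrow{\mathcal{C}}(x_2)\cap C\neq\emptyset$; $\simeq$ is the union of such relations. $\mathcal{T}X=\mathcal{P}_{fin}(AP)\times\mathcal{P}_{fin}(X)\times\mathcal{P}_{fin}(X)$, $(\mathcal{T}f)(v,z,z')=(v,f[z],f[z'])$; behavioural equivalence means equal images under the unique homomorphism to the final $\mathcal{T}$-coalgebra.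 *)

(* Defs.v *)
From mathcomp Require Import all_boot.
From mathcomp Require Import boolp classical_sets cardinality.
Set Implicit Arguments. Unset Strict Implicit. Unset Printing Implicit Defensive.
Local Open Scope classical_set_scope.

Section QDCM.
Variables (AP X : Type).

Definition closureR (R : X -> X -> Prop) (A : set X) : set X :=
  A `|` [set x | exists2 a, A a & R a x].
Definition fwdC (R : X -> X -> Prop) (x : X) : set X := closureR R [set x].
Definition bwdC (R : X -> X -> Prop) (x : X) : set X :=
  closureR (fun a b => R b a) [set x].
Definition Vinv (V : AP -> set X) (x : X) : set AP := [set p | V p x].

Definition finitely_closed (R : X -> X -> Prop) := forall x, finite_set (fwdC R x).
Definition finitely_backward_closed (R : X -> X -> Prop) :=
  forall x, finite_set (bwdC R x).

Definition class_bisim (R : X -> X -> Prop) (V : AP -> set X)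
  (B : X -> X -> Prop) : Prop :=
  [/\ (exists x y, B x y),
      (forall x, B x x), (forall x y, B x y -> B y x),
      (forall x y z, B x y -> B y z -> B x z) &
      forall x1 x2, B x1 x2 ->
        [/\ Vinv V x1 = Vinv V x2,
            (forall z, (fwdC R x1 `&` [set y | B z y] !=set0) <->
                       (fwdC R x2 `&` [set y | B z y] !=set0)) &
            (forall z, (bwdC R x1 `&` [set y | B z y] !=set0) <->
                       (bwdC R x2 `&` [set y | B z y] !=set0))]].

Definition cbisimilar R V (x1 x2 : X) : Prop :=
  exists B, class_bisim R V B /\ B x1 x2.

End QDCM.

(* The functor T Y = P_fin(AP) x P_fin(Y) x P_fin(Y) *)
Definition Tobj (AP Y : Type) : Type :=
  { t : set AP * set Y * set Y |
      [/\ finite_set t.1.1, finite_set t.1.2 & finite_set t.2] }.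

Definition is_hom (AP Y Z : Type) (c : Y -> Tobj AP Y) (d : Z -> Tobj AP Z)
  (f : Y -> Z) : Prop :=
  forall y, proj1_sig (d (f y)) =
    let: (v, z, z') := proj1_sig (c y) in (v, f @` z, f @` z').

Definition is_final (AP Z : Type) (zeta : Z -> Tobj AP Z) : Prop :=
  forall (Y : Type) (c : Y -> Tobj AP Y), exists! h : Y -> Z, is_hom c zeta h.

Definition eta_model (AP X : Type) (R : X -> X -> Prop) (V : AP -> set X)
  (hV : forall x, finite_set (Vinv V x))
  (hF : finitely_closed R) (hB : finitely_backward_closed R) (x : X) : Tobj AP X :=
  exist _ (Vinv V x, fwdC R x, bwdC R x) (And3 (hV x) (hF x) (hB x)).

(* x1, x2 behaviourally equivalent: equal images under the (unique)
   homomorphism into the final coalgebra (Z, zeta) *)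
Definition beh_equiv (AP X Z : Type) (c : X -> Tobj AP X) (zeta : Z -> Tobj AP Z)
  (x1 x2 : X) : Prop :=
  forall h : X -> Z, is_hom c zeta h -> h x1 = h x2.

(* Main.v *)
Require Import Defs.
From mathcomp Require Import all_boot.
From mathcomp Require Import boolp classical_sets cardinality.
Set Implicit Arguments. Unset Strict Implicit. Unset Printing Implicit Defensive.
Local Open Scope classical_set_scope.

Definition qcoal (AP X : Type) (R : X -> X -> Prop) (V : AP -> set X)
  (hV : forall x, finite_set (Vinv V x))
  (hF : finitely_closed R) (hB : finitely_backward_closed R)
  (B : X -> X -> Prop) (C : set X) : Tobj AP (set X) :=
  match pselect (exists x, C = [set y | B x y]) with
  | left e => let x := proj1_sig (cid e) in
      exist _ (Vinv V x, (fun a => [set y | B a y]) @` fwdC R x,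
                        (fun a => [set y | B a y]) @` bwdC R x)
        (And3 (hV x) (finite_image _ (hF x)) (finite_image _ (hB x)))
  | right _ => exist _ (set0, set0, set0)
        (And3 (@finite_set0 _) (@finite_set0 _) (@finite_set0 _))
  end.

Lemma img_meet (X Z : Type) (h : X -> Z) (A : set X) z :
  (A `&` [set y | h z = h y] !=set0) <-> (h @` A) (h z).
Proof.
split; first by move=> [y [Ay e]]; exists y.
by move=> [y Ay e]; exists y; split.
Qed.

Section Bis.
Variables (AP X : Type) (R : X -> X -> Prop) (V : AP -> set X) (B : X -> X -> Prop).
Hypothesis hBis : class_bisim R V B.

Lemma cls_eq a b : B a b -> [set y | B a y] = [set y | B b y].
Proof.
case: hBis => _ _ Hs Ht _ Hab; apply/seteqP; split => t /=.
- by move=> H; apply: Ht (Hs _ _ Hab) H.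
- by move=> H; apply: Ht Hab H.
Qed.

Lemma img_sub (F : X -> set X)
  (HF : forall a b, B a b -> forall z, (F a `&` [set y | B z y] !=set0) <->
                       (F b `&` [set y | B z y] !=set0)) a b :
  B a b -> ((fun c => [set y | B c y]) @` F a) `<=` ((fun c => [set y | B c y]) @` F b).
Proof.
case: hBis => _ Hr Hs Ht _ Hab C [y Fy <-].
have [|y' [Fy' Byy']] := (HF a b Hab y).1; first by exists y; split => //; apply: Hr.
by exists y' => //; symmetry; apply: cls_eq.
Qed.

Lemma img_eq (F : X -> set X)
  (HF : forall a b, B a b -> forall z, (F a `&` [set y | B z y] !=set0) <->
                       (F b `&` [set y | B z y] !=set0)) a b :
  B a b -> ((fun c => [set y | B c y]) @` F a) = ((fun c => [set y | B c y]) @` F b).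
Proof.
move=> Hab; apply/seteqP; split; apply: img_sub => //.
by case: hBis => _ _ Hs _ _; apply: Hs.
Qed.
End Bis.

Theorem corollary1 (AP X : Type) (R : X -> X -> Prop) (V : AP -> set X)
  (hV : forall x, finite_set (Vinv V x))
  (hF : finitely_closed R) (hB : finitely_backward_closed R)
  (Z : Type) (zeta : Z -> Tobj AP Z) (hZ : is_final zeta)
  (x1 x2 : X) :
  cbisimilar R V x1 x2 <-> beh_equiv (eta_model hV hF hB) zeta x1 x2.
Proof.
split.
- move=> [B [Hbis B12]] h hh.
  have Hbis' := Hbis.
  case: Hbis' => _ Hr Hs Ht Hc.
  pose q := fun x => [set y | B x y].
  have qhom : is_hom (eta_model hV hF hB) (qcoal hV hF hB B) q.
    move=> y /=; rewrite /qcoal; case: pselect => [e|ne]; last first.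
      by exfalso; apply: ne; exists y.
    case: (cid e) => x' /= ex'.
    have Byx : B y x'.
      have : [set t | B x' t] x' by apply: Hr.
      by rewrite -ex'.
    have [HV HF1 HB1] := Hc _ _ Byx.
    rewrite HV.
    rewrite (img_eq Hbis (fun a b Hab => let: And3 _ f _ := Hc a b Hab in f) Byx).
    by rewrite (img_eq Hbis (fun a b Hab => let: And3 _ _ f := Hc a b Hab in f) Byx).
  have [g [gh _]] := hZ _ (qcoal hV hF hB B).
  have [u [uh uU]] := hZ _ (eta_model hV hF hB).
  have comp : is_hom (eta_model hV hF hB) zeta (g \o q).
    move=> y; rewrite /= gh qhom /=; congr (_, _, _); by rewrite image_comp.
  have E1 := uU _ hh; have E2 := uU _ comp.
  by rewrite -E1 E2 /= /q (cls_eq Hbis B12).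
- move=> Hbe.
  have [h [hh _]] := hZ _ (eta_model hV hF hB).
  exists (fun a b => h a = h b); split; last exact: Hbe.
  split.
  + by exists x1, x1.
  + by [].
  + by [].
  + by move=> x y z -> ->.
  + move=> a b Hab.
    have Ea := hh a; have Eb := hh b; simpl in Ea, Eb.
    rewrite Hab Eb in Ea.
    case: Ea => E1 E2 E3.
    split; first by [].
    * by move=> z; rewrite !img_meet E2.
    * by move=> z; rewrite !img_meet E3.
Qed.
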